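(* For $A=(a_{ij}) \in {\operatorname{\mathsf{TPD}}}_n(\mathbb{S}_{\max}^{\vee})$ with the diagonal elements $d_n \leq \cdots \leq d_1$ we have \[ P_A = \bigoplus_{k=0}^{n} \bigg((\ominus \mathbf{1})^{n-k} (\prod_{i\in [n-k]}d_i)\bigg)\mathsf{X}^{k}\enspace .\]
   Context: $\mathbb{S}_{\max}$ is the symmetrized tropical semiring over a divisible totally ordered abelian group, with zero $\mathbf{0}$, unit $\mathbf{1}$, minus $\ominus$; $\mathbb{S}_{\max}^\vee$ is the set of signed elements. $A\in{\operatorname{\mathsf{TPD}}}_n(\mathbb{S}_{\max}^\vee)$: $A$ symmetric with signed entries, $\mathbf{0}<x^TAx$ for all nonzero signed vectors $x$ (equivalently $\mathbf{0}<a_{ii}$, $a_{ij}^2<a_{ii}a_{jj}$ for $i\ne j$), where $a<b$ iff $b\ominus a$ is positive. $P_A=\det(\mathsf{X} I\ominus A)$ is the formal characteristic polynomial over $\mathbb{S}_{\max}$ (signed determinant, expanded formally). $[m]=\{1,\dots,m\}$, and the empty product ($[0]$) equals $\mathbf{1}$. *)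

(* Defs.v *)
From mathcomp Require Import all_boot all_order all_algebra all_fingroup.
Set Implicit Arguments. Unset Strict Implicit. Unset Printing Implicit Defensive.
Import GRing.Theory.
Local Open Scope ring_scope.

(* The value group: a (zmodType) abelian group G (written additively, so that
   tropical multiplication of moduli is +) with a relation le that is a
   translation-invariant total order, and G is divisible. *)
Definition div_tot_ord_group (G : zmodType) (le : rel G) : Prop :=
  [/\ (forall a, le a a) /\ (forall a b, le a b -> le b a -> a = b),
      (forall a b c, le a b -> le b c -> le a c),
      (forall a b, le a b \/ le b a),
      (forall a b c, le a b -> le (a + c) (b + c)) &
      (forall (x : G) (m : nat), (0 < m)%N -> exists y : G, y *+ m = x)].

Inductive sgn := Pos | Neg | Bal.

Definition sgn_join (s t : sgn) : sgn :=
  match s, t with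
  | Pos, Pos => Pos | Neg, Neg => Neg | _, _ => Bal end.
Definition sgn_mul (s t : sgn) : sgn :=
  match s, t with
  | Bal, _ => Bal | _, Bal => Bal
  | Pos, x => x | Neg, Pos => Neg | Neg, Neg => Pos end.
Definition sgn_opp (s : sgn) : sgn :=
  match s with Pos => Neg | Neg => Pos | Bal => Bal end.

Section Smax.
Variables (G : zmodType) (le : rel G).
Definition ltG (a b : G) := le a b && (a != b).

(* S_max: None is the zero 0; Some (s, a) is the element of modulus a and
   sign s (a, ⊖a, or a^• for s = Pos, Neg, Bal). *)
Definition Smax := option (sgn * G).

Definition szero : Smax := None.
Definition sone : Smax := Some (Pos, 0).
Definition sadd (x y : Smax) : Smax :=
  match x, y with
  | None, _ => y
  | _, None => x
  | Some (s, a), Some (t, b) =>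
      if ltG a b then y else if ltG b a then x else Some (sgn_join s t, a)
  end.
Definition smul (x y : Smax) : Smax :=
  match x, y with
  | Some (s, a), Some (t, b) => Some (sgn_mul s t, a + b)
  | _, _ => None
  end.
Definition sminus (x : Smax) : Smax :=
  match x with None => None | Some (s, a) => Some (sgn_opp s, a) end.
Definition spow (x : Smax) (m : nat) : Smax := iter m (smul x) sone.

Definition signed (x : Smax) : Prop :=
  match x with Some (Bal, _) => False | _ => True end.
Definition spositive (x : Smax) : Prop :=
  match x with Some (Pos, _) => True | _ => False end.
Definition slt (a b : Smax) : Prop := spositive (sadd b (sminus a)).
Definition sle (a b : Smax) : Prop := slt a b \/ a = b.

Definition qform n (A : 'M[Smax]_n) (x : 'I_n -> Smax) : Smax :=
  \big[sadd/szero]_(i < n) \big[sadd/szero]_(j < n) smul (smul (x i) (A i j)) (x j).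

Definition TPD n (A : 'M[Smax]_n) : Prop :=
  [/\ (forall i j, A i j = A j i),
      (forall i j, signed (A i j)) &
      (forall x : 'I_n -> Smax, (forall i, signed (x i)) ->
          (exists i, x i <> szero) -> slt szero (qform A x))].

Definition spoly := nat -> Smax.
Definition pconst (c : Smax) : spoly := fun k => if k == 0%N then c else szero.
Definition pzero : spoly := pconst szero.
Definition pone : spoly := pconst sone.
Definition pX : spoly := fun k => if k == 1%N then sone else szero.
Definition padd (p q : spoly) : spoly := fun k => sadd (p k) (q k).
Definition pscale (c : Smax) (p : spoly) : spoly := fun k => smul c (p k).
Definition pmul (p q : spoly) : spoly :=
  fun k => \big[sadd/szero]_(i < k.+1) smul (p i) (q (k - i)%N).

Definition sdet n (M : 'I_n -> 'I_n -> spoly) : spoly :=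
  \big[padd/pzero]_(s : 'S_n)
     pscale (if odd_perm s then sminus sone else sone)
            (\big[pmul/pone]_(i < n) M i (s i)).

Definition charpoly n (A : 'M[Smax]_n) : spoly :=
  sdet (fun i j => if i == j then padd pX (pconst (sminus (A i j)))
                   else pconst (sminus (A i j))).
End Smax.

(* Main.v *)
Require Import Defs.
From mathcomp Require Import all_boot all_order all_algebra all_fingroup.
From HB Require Import structures.
Set Implicit Arguments. Unset Strict Implicit. Unset Printing Implicit Defensive.
Import GRing.Theory.

Module Aux.
Local Open Scope ring_scope.

Section Main.
Variables (G : zmodType) (le : rel G).
Hypothesis HG : div_tot_ord_group le.

Lemma leR a : le a a. Proof. by case: HG => [[]]. Qed.
Lemma leA a b : le a b -> le b a -> a = b. Proof. by case: HG => [[_ h]] *; apply: h. Qed.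
Lemma leT a b c : le a b -> le b c -> le a c. Proof. by case: HG => _ h *; apply: h; eauto. Qed.
Lemma leTot a b : le a b \/ le b a. Proof. by case: HG => _ _ h *; apply: h. Qed.
Lemma leD a b c : le a b -> le (a + c) (b + c). Proof. by case: HG => _ _ _ h *; apply: h. Qed.
Lemma leDl a b c : le a b -> le (c + a) (c + b).
Proof. by rewrite ![c + _]addrC; apply: leD. Qed.
Lemma leD2 a b c d : le a b -> le c d -> le (a + c) (b + d).
Proof. move=> h1 h2; apply: leT (leD _ h1) (leDl _ h2). Qed.
Lemma leDK a b c : le (a + c) (b + c) -> le a b.
Proof. by move/(leD (- c)); rewrite -!addrA subrr !addr0. Qed.
Lemma halve (a : G) : (exists y : G, y + y = a).
Proof. case: HG => _ _ _ _ /(_ a 2%N isT) [y <-]; by exists y; rewrite mulr2n. Qed.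

Lemma ltGxx a : ltG le a a = false. Proof. by rewrite /ltG eqxx andbF. Qed.
Lemma ltG_asym a b : ltG le a b -> ltG le b a = false.
Proof.
rewrite /ltG => /andP[h1 h2]; apply/negbTE/negP => /andP[h3 h4].
by move: h2; rewrite (leA h1 h3) eqxx.
Qed.
Lemma ltG_trans a b c : ltG le a b -> ltG le b c -> ltG le a c.
Proof.
rewrite /ltG => /andP[h1 h2] /andP[h3 h4]; rewrite (leT h1 h3) /=.
apply/negP => /eqP e; subst c; by move: h2; rewrite (leA h1 h3) eqxx.
Qed.
Lemma ltG_le a b : ltG le a b -> le a b. Proof. by case/andP. Qed.
Lemma nle_lt a b : ~~ le a b -> ltG le b a.
Proof.
move=> h; rewrite /ltG; case: (leTot a b) => h'; first by rewrite h' in h.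
rewrite h' /=; apply/negP => /eqP e; subst; by rewrite leR in h.
Qed.
Lemma lt_nle a b : ltG le a b -> ~~ le b a.
Proof. move=> /andP[h1 h2]; apply/negP => h3; by rewrite (leA h1 h3) eqxx in h2. Qed.
Lemma lt_le_trans a b c : ltG le a b -> le b c -> ltG le a c.
Proof.
move=> h1 h2; case: (boolP (b == c)) => [/eqP <- //|hn].
by apply: ltG_trans h1 _; rewrite /ltG h2 hn.
Qed.
Lemma le_lt_trans a b c : le a b -> ltG le b c -> ltG le a c.
Proof.
move=> h1 h2; case: (boolP (a == b)) => [/eqP -> //|hn].
by apply: ltG_trans _ h2; rewrite /ltG h1 hn.
Qed.
Lemma ltD2 a b c d : ltG le a b -> le c d -> ltG le (a + c) (b + d).
Proof.
move=> h1 h2; apply: (lt_le_trans _ (leDl _ h2)).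
apply/nle_lt/negP => /leDK h; by move: (lt_nle h1); rewrite h.
Qed.
Lemma ltG_trich a b : [\/ ltG le a b, a = b | ltG le b a].
Proof.
case: (boolP (a == b)) => [/eqP ->|hn]; first by constructor 2.
case: (leTot a b) => h; first by constructor 1; rewrite /ltG h hn.
by constructor 3; rewrite /ltG h eq_sym hn.
Qed.

Lemma sgn_joinA : associative sgn_join. Proof. by do 3!case. Qed.
Lemma sgn_joinC : commutative sgn_join. Proof. by do 2!case. Qed.

Lemma saddC : commutative (sadd le).
Proof.
case=> [[s a]|] [[t b]|] //=.
have [h|<-|h] := ltG_trich a b.
- by rewrite h (ltG_asym h).
- by rewrite ltGxx sgn_joinC.
- by rewrite h (ltG_asym h).
Qed.

Ltac cmp_contra :=
  match goal with
  | H : is_true (ltG le ?x ?x) |- _ => by rewrite ltGxx in H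
  | H1 : is_true (ltG le ?x ?y), H2 : is_true (ltG le ?y ?x) |- _ => by rewrite (ltG_asym H1) in H2
  | H1 : is_true (ltG le ?x ?y), H2 : is_true (ltG le ?y ?z), H3 : is_true (ltG le ?z ?x) |- _ =>
      by rewrite (ltG_asym (ltG_trans H1 H2)) in H3
  end.
Ltac cmp_rw :=
  repeat (first [progress rewrite /= | rewrite ltGxx | match goal with
  | H : is_true (ltG le ?x ?y) |- context[ltG le ?x ?y] => rewrite H
  | H : is_true (ltG le ?x ?y) |- context[ltG le ?y ?x] => rewrite (ltG_asym H)
  end]).

Lemma saddA : associative (sadd le).
Proof.
case=> [[s a]|] [[t b]|] [[u c]|] //=; last by case: ifP => //; case: ifP.
have [h1|e1|h1] := ltG_trich a b; have [h2|e2|h2] := ltG_trich b c;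
  have [h3|e3|h3] := ltG_trich a c; subst; try cmp_contra; cmp_rw; rewrite ?sgn_joinA //.
Qed.

Lemma sadd0s : left_id (szero G) (sadd le). Proof. by []. Qed.
HB.instance Definition _ := Monoid.isComLaw.Build (Smax G) (szero G) (sadd le) saddA saddC sadd0s.

Lemma sgn_mulA : associative sgn_mul. Proof. by do 3!case. Qed.
Lemma sgn_mulC : commutative sgn_mul. Proof. by do 2!case. Qed.
Lemma smulA : associative (@smul G).
Proof. by case=> [[s a]|] [[t b]|] [[u c]|] //=; rewrite sgn_mulA addrA. Qed.
Lemma smulC : commutative (@smul G).
Proof. by case=> [[s a]|] [[t b]|] //=; rewrite sgn_mulC addrC. Qed.
Lemma smul1s : left_id (sone G) (@smul G).
Proof. by case=> [[s a]|] //=; rewrite add0r; case: s. Qed.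
HB.instance Definition _ := Monoid.isComLaw.Build (Smax G) (sone G) (@smul G) smulA smulC smul1s.


Local Notation S := (Smax G).
Local Notation sadd := (sadd le).

Definition mle (x y : S) : bool :=
  match x, y with
  | None, _ => true
  | Some _, None => false
  | Some (_, a), Some (_, b) => le a b
  end.
Definition below (M : G) (x : S) : bool :=
  match x with None => true | Some (_, a) => ltG le a M end.

Lemma mle_refl x : mle x x. Proof. by case: x => [[s a]|] //=; apply: leR. Qed.
Lemma mle_trans x y z : mle x y -> mle y z -> mle x z.
Proof. by case: x => [[? a]|] //; case: y => [[? b]|] //; case: z => [[? c]|] //=; apply: leT. Qed.
Lemma mle_total x y : mle x y \/ mle y x.
Proof. case: x => [[? a]|]; case: y => [[? b]|] /=; auto; exact: leTot. Qed.
Lemma mle_below M x y : mle x y -> below M y -> below M x.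
Proof. case: x => [[? a]|] //; case: y => [[? b]|] //=; exact: le_lt_trans. Qed.


Ltac tri2 a b := let h := fresh "h" in let e := fresh "e" in
  have [h|e|h] := ltG_trich a b; [|subst|]; try cmp_contra; cmp_rw.

Lemma mle_saddl x y : mle x (sadd x y).
Proof.
case: x => [[s a]|] //; case: y => [[t b]|]; rewrite ?mle_refl //.
tri2 a b => //=; try exact: leR; exact: ltG_le.
Qed.
Lemma mle_saddr x y : mle y (sadd x y).
Proof. by rewrite saddC; apply: mle_saddl. Qed.
Lemma mle_sadd x y z : mle x z -> mle y z -> mle (sadd x y) z.
Proof.
case: x => [[s a]|] //; case: y => [[t b]|] //.
by rewrite /=; case: ifP => _ //; case: ifP.
Qed.
Lemma below_sadd M x y : below M x -> below M y -> below M (sadd x y).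
Proof.
case: x => [[s a]|] //; case: y => [[t b]|] //.
by rewrite /=; case: ifP => _ //; case: ifP.
Qed.
Lemma sgn_joinxx s : sgn_join s s = s. Proof. by case: s. Qed.
Lemma sadd_top s M y : below M y \/ y = Some (s, M) -> sadd (Some (s, M)) y = Some (s, M).
Proof.
case=> [|->]; last by rewrite /= ltGxx sgn_joinxx.
case: y => [[t b]|] //= h; by rewrite h (ltG_asym h).
Qed.
Lemma sadd_same s a b : exists c, sadd (Some (s, a)) (Some (s, b)) = Some (s, c).
Proof.
rewrite /=; case: ifP => _; first by eexists.
case: ifP => _; first by eexists. by rewrite sgn_joinxx; eexists.
Qed.
Definition NP M (x : S) := exists s, x = Some (s, M) /\ s <> Pos.
Lemma NP_sadd M x y : NP M x -> mle y (Some (Pos, M)) -> NP M (sadd x y).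
Proof.
case=> s [-> hs]; case: y => [[t b]|] //=; last by exists s.
move=> hb; have -> : ltG le M b = false by apply/negP => /lt_nle; rewrite hb.
case: ifP => _; first by exists s.
exists (sgn_join s t); split => //; by case: s hs => //; case: t.
Qed.


Lemma sadds0 x : sadd x (szero G) = x. Proof. by case: x => [[]|]. Qed.
Lemma smuls0 x : smul x (szero G) = szero G. Proof. by case: x => [[]|]. Qed.
Lemma smul0s x : smul (szero G) x = szero G. Proof. by []. Qed.

Lemma padd_eval I r (P : pred I) (F : I -> spoly G) k :
  (\big[padd le/pzero G]_(i <- r | P i) F i) k = \big[sadd/szero G]_(i <- r | P i) F i k.
Proof.
apply: (big_morph (fun p : spoly G => p k)) => //.
by rewrite /pzero /pconst; case: k.
Qed.

Lemma pmul01 (p q : spoly G) k : (forall j, (1 < j)%N -> p j = szero G) ->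
  pmul le p q k = sadd (smul (p 0%N) (q k))
                       (if k is k'.+1 then smul (p 1%N) (q k') else szero G).
Proof.
move=> hp; rewrite /pmul big_ord_recl subn0.
case: k => [|k]; first by rewrite big_ord0.
rewrite big_ord_recl /= subSS subn0 big1 ?sadds0 // => i _.
by rewrite hp.
Qed.

Variable n : nat.
Variable A : 'M[S]_n.

Definition Mf := fun i j : 'I_n => if i == j then padd le (pX G) (pconst (sminus (A i j)))
                   else pconst (sminus (A i j)).
Definition Q (s : 'S_n) (r : seq 'I_n) := \big[pmul le/pone G]_(i <- r) Mf i (s i).
Definition valid (s : 'S_n) r k (I : {set 'I_n}) :=
  [/\ (forall i, i \in I -> i \in r), (#|I| + k = size r)%N & forall i, i \in r -> i \notin I -> s i = i].
Definition w (s : 'S_n) (I : {set 'I_n}) := \big[@smul G/sone G]_(i in I) A i (s i).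

Lemma Mf_coef i j k : Mf i j k = if k == 0%N then sminus (A i j) else if (k == 1%N) && (i == j) then sone G else szero G.
Proof.
rewrite /Mf; case: (i == j); rewrite /padd /pX /pconst; case: k => [|[|k]] //=.
Qed.

Lemma Qcons s x r k : Q s (x :: r) k =
  sadd (smul (sminus (A x (s x))) (Q s r k))
       (if k is k'.+1 then smul (if x == s x then sone G else szero G) (Q s r k') else szero G).
Proof.
rewrite /Q big_cons pmul01 ?Mf_coef //.
by move=> [|[|j]] // _; rewrite Mf_coef.
Qed.

Definition Pr s (V : {set 'I_n} -> Prop) (u : S) := u = szero G \/ exists I, V I /\ mle u (w s I).

Lemma Pr_sadd s V u v : Pr s V u -> Pr s V v -> Pr s V (sadd u v).
Proof.
case=> [->|[I1 [h1 m1]]] //; case=> [->|[I2 [h2 m2]]]; rewrite ?sadds0; first by right; exists I1.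
right; case: (mle_total (w s I1) (w s I2)) => h.
- exists I2; split => //; apply: mle_sadd => //; exact: mle_trans h.
- exists I1; split => //; apply: mle_sadd => //; exact: mle_trans h.
Qed.

Lemma mle_smul x x' y y' : mle x x' -> mle y y' -> mle (smul x y) (smul x' y').
Proof.
case: x => [[s a]|] //; case: x' => [[s' a']|] //; case: y => [[t b]|] //; case: y' => [[t' b']|] //=.
exact: leD2.
Qed.
Lemma mle_sminus x : mle (sminus x) x. Proof. by case: x => [[s a]|] //=; apply: leR. Qed.

Lemma upper s r : uniq r -> forall k, Pr s (valid s r k) (Q s r k).
Proof.
elim: r => [_ [|k]|x r IH /andP[xr ur] k].
- right; exists set0; split; last by rewrite /Q big_nil /w big_set0 mle_refl.
  by split => [i|//|i]; rewrite ?in_set0 ?cards0.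
- by left; rewrite /Q big_nil.
rewrite Qcons; apply: Pr_sadd.
  case: (IH ur k) => [->|[I [[h1 h2 h3] hm]]]; first by rewrite smuls0; left.
  have xI : x \notin I by apply/negP => /h1; rewrite (negbTE xr).
  right; exists (x |: I); split.
    split.
    + by move=> i; rewrite in_setU1 in_cons => /orP[->|/h1 ->] //; rewrite orbT.
    + by rewrite cardsU1 xI /= add1n addSn h2.
    + move=> i; rewrite in_cons in_setU1 negb_or => /orP[/eqP ->|ir]; first by rewrite eqxx.
      by case/andP => _; apply: h3.
  by rewrite /w big_setU1 //=; apply: mle_smul => //; apply: mle_sminus.
case: k => [|k]; first by left.
case: (boolP (x == s x)) => hx; last by left.
rewrite smul1s; case: (IH ur k) => [->|[I [[h1 h2 h3] hm]]]; first by left.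
right; exists I; split => //; split => //.
- by move=> i /h1; rewrite in_cons => ->; rewrite orbT.
- by rewrite /= addnS h2.
- move=> i; rewrite in_cons => /orP[/eqP ->|]; first by move/eqP: hx.
  by apply: h3.
Qed.

Lemma Qbig s r k : uniq r -> (size r < k)%N -> Q s r k = szero G.
Proof.
move=> ur hk; case: (upper s ur k) => [//|[I [[_ h2 _] _]]].
by move: hk; rewrite -h2 ltnNge leq_addl.
Qed.

Lemma card_sub_seq (I : {set 'I_n}) r : uniq r -> (forall i, i \in I -> i \in r) -> (#|I| <= size r)%N.
Proof.
move=> ur h; rewrite -(card_uniqP ur); apply: subset_leq_card; apply/subsetP => i; exact: h.
Qed.

Lemma leHalf x y : le (x + x) (y + y) -> le x y.
Proof.
move=> h; case: (boolP (le x y)) => // /nle_lt hyx.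
by move: (lt_nle (ltD2 hyx (ltG_le hyx))); rewrite h.
Qed.
Lemma ltHalf x y : ltG le (x + x) (y + y) -> ltG le x y.
Proof.
move=> h; case: (boolP (le y x)) => [hyx|/nle_lt //].
by move: (lt_nle h); rewrite (leD2 hyx hyx).
Qed.

Hypothesis HA : TPD le A.

Lemma qform_pos (x : 'I_n -> S) : (forall i, signed (x i)) -> (exists i, x i <> szero G) ->
  spositive (qform le A x).
Proof. by case: HA => _ _ h hs hne; move: (h x hs hne); rewrite /slt /= sadds0. Qed.

Lemma Hdiag' i : exists a, A i i = Some (Pos, a).
Proof.
pose x := fun l : 'I_n => if l == i then sone G else szero G.
have := @qform_pos x.
have -> : qform le A x = A i i.
  rewrite /qform (bigD1 i) //= (bigD1 i) //= big1 ?sadds0; last first.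
    by move=> j /negbTE hj; rewrite /x hj smuls0.
  rewrite big1 ?sadds0; last first.
    by move=> i' /negbTE hi'; rewrite big1 // => j _; rewrite /x hi'.
  by rewrite /x eqxx smul1s smulC smul1s.
case: (A i i) => [[[] a]|] h; try by exists a.
- by case: h => //; [move=> l; rewrite /x; case: (l == i) | exists i; rewrite /x eqxx].
- by case: h => //; [move=> l; rewrite /x; case: (l == i) | exists i; rewrite /x eqxx].
- by case: h => //; [move=> l; rewrite /x; case: (l == i) | exists i; rewrite /x eqxx].
Qed.

Lemma offdiag i j t tau a b : i != j -> A i j = Some (t, tau) -> A i i = Some (Pos, a) ->
  A j j = Some (Pos, b) -> ltG le (tau + tau) (a + b).
Proof.
move=> hij hA ha hb.
case: (boolP (le (a + b) (tau + tau))) => h; last exact: nle_lt.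
exfalso.
have ht : t <> Bal by case: HA => _ /(_ i j); rewrite hA; case: (t).
case: (halve (b - a)) => u hu.
pose M := tau + u.
have hbM : le b M.
  apply: leHalf; have -> : b + b = a + b + (u + u) by rewrite hu addrAC [a + _]addrC subrK.
  have -> : M + M = tau + tau + (u + u) by rewrite /M addrACA.
  exact: leD.
pose x := fun l : 'I_n => if l == i then Some (Pos, u) else if l == j then Some (sgn_opp t, 0) else szero G.
have hsym : A j i = A i j by case: HA => hs _ _; rewrite hs.
have hbnd : forall i' j', mle (smul (smul (x i') (A i' j')) (x j')) (Some (Pos, M)).
  move=> i' j'; rewrite /x.
  case: (i' =P i) => [->|hi']; case: (j' =P i) => [->|hj'].
  - rewrite ha /=; have -> : u + a + u = b by rewrite addrAC addrC hu addrC subrK.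
    exact: hbM.
  - case: (j' =P j) => [->|hj'']; last by rewrite smuls0.
    by rewrite hA /= addr0 addrC; apply: leR.
  - case: (i' =P j) => [->|hi'']; last by [].
    by rewrite hsym hA /= add0r; apply: leR.
  - case: (i' =P j) => [->|hi'']; last by [].
    case: (j' =P j) => [->|hj'']; last by rewrite smuls0.
    by rewrite hb /= addr0 add0r.
have hnp : NP M (qform le A x).
  rewrite /qform (bigD1 i) //=; apply: NP_sadd; last first.
    apply: (big_ind (fun v => mle v (Some (Pos, M)))) => //; first by move=> *; apply: mle_sadd.
    by move=> i' _; apply: (big_ind (fun v => mle v (Some (Pos, M)))) => //; by move=> *; apply: mle_sadd.
  rewrite (bigD1 j) //=; apply: NP_sadd; last first.
    by apply: (big_ind (fun v => mle v (Some (Pos, M)))) => //; by move=> *; apply: mle_sadd.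
  rewrite /x eqxx eq_sym (negbTE hij) eqxx hA /=.
  exists (sgn_mul (sgn_mul Pos t) (sgn_opp t)); split; first by rewrite addr0 addrC.
  by case: (t) ht.
have := @qform_pos x.
case: hnp => s' [-> hs'].
move=> H; have : spositive (Some (s', M)).
  apply: H; first by move=> l; rewrite /x; case: (l == i) => //; case: (l == j) => //; by case: (t) ht.
  by exists i; rewrite /x eqxx.
by case: (s') hs'.
Qed.

Definition Hdiag := Hdiag'.


Definition nsgn m := iter m (sgn_mul Neg) Pos.

Lemma mle_sminusr x : mle x (sminus x). Proof. by case: x => [[s a]|] //=; apply: leR. Qed.

Lemma smul_negpos a m b : smul (sminus (Some (Pos, a))) (Some (nsgn m, b)) = Some (nsgn m.+1, a + b) :> S.
Proof. by []. Qed.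

Lemma lower r : uniq r -> forall k, (k <= size r)%N -> exists mu,
  Q 1 r k = Some (nsgn (size r - k), mu) /\ forall I, valid 1 r k I -> mle (w 1 I) (Q 1 r k).
Proof.
elim: r => [_ k|x r IH /andP[xr ur] k hk].
  rewrite leqn0 => /eqP ->; exists 0; split; first by rewrite /Q big_nil.
  move=> I [h1 h2 h3]; move: h2; rewrite addn0 => /cards0_eq ->.
  by rewrite /w big_set0 /Q big_nil mle_refl.
have Elow : forall I, valid 1 (x :: r) k I -> mle (w 1 I) (Q 1 (x :: r) k).
  move=> I [h1 h2 h3]; case: (boolP (x \in I)) => xI.
    have hJ : valid 1 r k (I :\ x).
      split.
      - move=> i; rewrite in_setD1 => /andP[hix /h1]; rewrite in_cons => /orP[/eqP hh|//].
        by rewrite hh eqxx in hix.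
      - by move: h2; rewrite (cardsD1 x I) xI /= add1n addSn => -[].
      - by move=> i _ _; rewrite perm1.
    have hkr : (k <= size r)%N by case: hJ => _ <- _; rewrite leq_addl.
    case: (IH ur k hkr) => mu [_ hmu].
    rewrite /w (big_setD1 _ xI) Qcons; apply: mle_trans (mle_saddl _ _).
    by apply: mle_smul; [rewrite perm1; apply: mle_sminusr | apply: hmu].
  have hI : (#|I| <= size r)%N.
    apply: card_sub_seq => // i hi; move: (h1 i hi); rewrite in_cons => /orP[/eqP hh|//].
    by rewrite -hh hi in xI.
  case: k hk h2 => [|k] hk h2; first by move: hI; rewrite addn0 in h2; rewrite h2 /= ltnn.
  have hJ : valid 1 r k I.
    split => //.
    - move=> i hi; move: (h1 i hi); rewrite in_cons => /orP[/eqP hh|//].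
      by rewrite -hh hi in xI.
    - by move: h2; rewrite addnS => -[].
    - by move=> i _ _; rewrite perm1.
  case: (IH ur k) => [|mu [_ hmu]]; first by case: hJ => _ <- _; rewrite leq_addl.
  rewrite Qcons perm1 eqxx smul1s; apply: mle_trans (mle_saddr _ _); exact: hmu.
case: (Hdiag x) => a ha.
case: k hk Elow => [|k] hk Elow.
  case: (IH ur 0%N isT) => mu [hq _]; exists (a + mu); split => //.
  by rewrite Qcons sadds0 perm1 hq ha /= subn0.
case: (IH ur k hk) => mu2 [hq2 _].
have hQ := Qcons 1 x r k.+1; rewrite perm1 eqxx smul1s hq2 ha in hQ.
case: (ltnP k (size r)) => hkr.
  case: (IH ur k.+1 hkr) => mu1 [hq1 _]; rewrite hq1 smul_negpos in hQ.
  have e1 : (size r - k = (size r - k.+1).+1)%N by rewrite subnSK.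
  rewrite e1 in hQ.
  case: (sadd_same (nsgn (size r - k.+1).+1) (a + mu1) mu2) => c hc.
  exists c; split => //; by rewrite hQ hc subSS e1.
have ek : k = size r by apply/eqP; rewrite eqn_leq hkr andbT -ltnS.
move: Elow hQ hq2; rewrite ek (Qbig _ ur (ltnSn _)) smuls0 sadd0s => Elow hQ hq2.
exists mu2; split => //; rewrite hQ subSS subnn.
Qed.

Lemma sum_le (P : pred 'I_n) (f g : 'I_n -> G) : (forall i, P i -> le (f i) (g i)) ->
  le (\sum_(i | P i) f i) (\sum_(i | P i) g i).
Proof. move=> h; apply: (big_ind2 (fun x y => le x y)) => //; [exact: leR | move=> *; exact: leD2]. Qed.

Lemma sum_lt (P : pred 'I_n) (f g : 'I_n -> G) i0 : P i0 -> ltG le (f i0) (g i0) ->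
  (forall i, P i -> le (f i) (g i)) -> ltG le (\sum_(i | P i) f i) (\sum_(i | P i) g i).
Proof.
move=> h0 hlt h; rewrite (bigD1 i0) // [X in ltG le _ X](bigD1 i0) //=.
by apply: ltD2 => //; apply: sum_le => i /andP[]; auto.
Qed.

Lemma bigsmul_some (P : pred 'I_n) (F : 'I_n -> S) (g : 'I_n -> G) :
  (forall i, P i -> exists sg, F i = Some (sg, g i)) ->
  exists sg, \big[@smul G/sone G]_(i | P i) F i = Some (sg, \sum_(i | P i) g i).
Proof.
move=> h; apply: (big_rec2 (fun x y => exists sg, x = Some (sg, y))); first by exists Pos.
by move=> i y1 y2 Pi [sg ->]; case: (h i Pi) => sg' ->; eexists.
Qed.

Lemma bigsmul_pos (P : pred 'I_n) (F : 'I_n -> S) (g : 'I_n -> G) :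
  (forall i, P i -> F i = Some (Pos, g i)) ->
  \big[@smul G/sone G]_(i | P i) F i = Some (Pos, \sum_(i | P i) g i).
Proof.
move=> h; apply: (big_rec2 (fun x y => x = Some (Pos, y))) => //.
by move=> i y1 y2 Pi ->; rewrite h.
Qed.

Definition mo (x : S) : G := if x is Some (_, a) then a else 0.
Definition dg i := mo (A i i).
Lemma Adg i : A i i = Some (Pos, dg i).
Proof. by rewrite /dg; case: (Hdiag i) => a ->. Qed.

Lemma w1 I : w 1 I = Some (Pos, \sum_(i in I) dg i).
Proof. by rewrite /w; apply: bigsmul_pos => i _; rewrite perm1 Adg. Qed.

Lemma nonid_below s I k : s != 1%g -> valid s (index_enum 'I_n) k I ->
  below (\sum_(i in I) dg i) (w s I).
Proof.
move=> hs [_ _ h3].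
have hfix i : i \notin I -> s i = i by apply: h3; rewrite mem_index_enum.
have hcl i : (s i \in I) = (i \in I).
  apply/idP/idP => hi.
    by apply/negP => /negP hn; move: hi; rewrite hfix // (negbTE hn).
  apply/negP => /negP hn; move: (hfix _ hn) => /perm_inj e.
  by move: hn; rewrite e hi.
case: (boolP [exists i, (i \in I) && (if A i (s i) is None then true else false)]).
  case/existsP => i0 /andP[hi0]; case hA0: (A i0 (s i0)) => [[? ?]|] // _.
  by rewrite /w [X in below _ X](bigD1 i0) //= hA0.
move=> hall.
have hsome : forall i, i \in I -> exists sg, A i (s i) = Some (sg, mo (A i (s i))).
  move=> i hi; case e: (A i (s i)) => [[sg a]|]; first by exists sg.
  by move/existsP: hall; case; exists i; rewrite hi e.
case: (bigsmul_some hsome) => sg; rewrite /w => ->; rewrite /below.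
have [i0 hi0] : exists i0, s i0 != i0.
  apply/existsP; move: hs; apply: contraR => /existsPn hn.
  by apply/eqP/permP => i; rewrite perm1; apply/eqP; move: (hn i); rewrite negbK.
have i0I : i0 \in I by apply/negP => /negP hn; move: hi0; rewrite (hfix _ hn) eqxx.
apply: ltHalf.
have -> : \sum_(i in I) dg i + \sum_(i in I) dg i = \sum_(i in I) (dg i + dg (s i)).
  rewrite big_split /=; congr (_ + _).
  rewrite (reindex_inj (@perm_inj _ s)) /=; apply: eq_bigl => i; by rewrite hcl.
rewrite -big_split /=.
apply: (sum_lt (i0 := i0)) => //.
  move: (hsome _ i0I) => [t ht]; apply: (offdiag _ ht (Adg _) (Adg _)); by rewrite eq_sym.
move=> i hi; case: (boolP (s i == i)) => [/eqP e|hne].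
  by rewrite e /dg; apply: leR.
move: (hsome _ hi) => [t ht]; apply: ltG_le; apply: (offdiag _ ht (Adg _) (Adg _)); by rewrite eq_sym.
Qed.

Lemma card_lt c : (c <= n)%N -> #|[set j : 'I_n | (j < c)%N]| = c.
Proof.
move=> hc.
have -> : [set j : 'I_n | (j < c)%N] = [set widen_ord hc j | j : 'I_c].
  apply/setP => j; rewrite inE; apply/idP/imsetP => [hj|[j' _ ->] /=]; last exact: ltn_ord.
  by exists (Ordinal hj) => //; apply: val_inj.
rewrite card_imset ?card_ord //.
by move=> x y /(congr1 val) /= /val_inj.
Qed.

Lemma sortsum (delta : 'I_n -> G) : (forall i j : 'I_n, (i <= j)%N -> le (delta j) (delta i)) ->
  forall J : {set 'I_n}, le (\sum_(j in J) delta j) (\sum_(j < n | (j < #|J|)%N) delta j).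
Proof.
move=> hmono J.
set c := #|J|.
have hc : (c <= n)%N by rewrite /c -[X in (_ <= X)%N]card_ord max_card.
set P := [set j : 'I_n | (j < c)%N].
have -> : \sum_(j < n | (j < c)%N) delta j = \sum_(j in P) delta j.
  by apply: eq_bigl => j; rewrite inE.
rewrite (big_setID P) [X in le _ X](big_setID J) /= setIC.
apply: leDl.
have hcard : #|J :\: P| = #|P :\: J|.
  have h1 := cardsID P J; have h2 := cardsID J P.
  rewrite card_lt // -/c setIC in h2.
  by apply/eqP; rewrite -(eqn_add2l #|J :&: P|) h1 h2.
case: (set_0Vmem (P :\: J)) => [hY|[i0 hi0]].
  have hX : J :\: P = set0 by apply: cards0_eq; rewrite hcard hY cards0.
  by rewrite hX hY !big_set0; apply: leR.
have hc0 : (0 < c)%N by move: hi0; rewrite !inE => /andP[_]; case: (c).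
have hp : (c.-1 < n)%N by rewrite (leq_trans _ hc) // prednK.
pose p := Ordinal hp.
apply: (leT (b := \sum_(j in J :\: P) delta p)).
  apply: sum_le => j; rewrite !inE => /andP[hj _]; apply: hmono => /=.
  by apply: leq_trans (leq_pred c) _; rewrite leqNgt.
rewrite (sumr_const (mem (J :\: P))) hcard -(sumr_const (mem (P :\: J))).
apply: sum_le => j; rewrite !inE => /andP[_ hj]; apply: hmono => /=.
by rewrite -ltnS prednK.
Qed.


Variables (d : 'I_n -> S) (sigma : 'S_n).
Hypothesis Hd : forall i, d i = A (sigma i) (sigma i).
Hypothesis Hsorted : forall i j : 'I_n, nat_of_ord j = (nat_of_ord i).+1 -> sle le (d j) (d i).

Definition delta i := dg (sigma i).
Lemma dpos i : d i = Some (Pos, delta i). Proof. by rewrite Hd Adg. Qed.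

Lemma adj (i j : 'I_n) : nat_of_ord j = (nat_of_ord i).+1 -> le (delta j) (delta i).
Proof.
move=> h; have := Hsorted h; rewrite !dpos; case=> [hlt|[->]]; last exact: leR.
case: (boolP (le (delta j) (delta i))) => // /nle_lt hl.
by move: hlt; rewrite /slt /= hl.
Qed.

Lemma mono (i j : 'I_n) : (i <= j)%N -> le (delta j) (delta i).
Proof.
move=> hij; have [m hm] : exists m, nat_of_ord j = (i + m)%N by exists (j - i)%N; rewrite subnKC.
elim: m j hm {hij} => [|m IH] j hm.
  have -> : j = i by apply: val_inj; rewrite /= hm addn0.
  exact: leR.
have hm' : (i + m < n)%N by have := ltn_ord j; rewrite hm addnS => /ltnW.
apply: leT (IH (Ordinal hm') erefl).
by apply: adj; rewrite /= hm addnS.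
Qed.

Definition D c := \sum_(j < n | (j < c)%N) delta j.

Lemma sumI_le (I : {set 'I_n}) : le (\sum_(i in I) dg i) (D #|I|).
Proof.
rewrite (reindex_inj (@perm_inj _ sigma)) /=.
have -> : \sum_(j | sigma j \in I) dg (sigma j) = \sum_(j in sigma @^-1: I) delta j.
  by apply: eq_bigl => j; rewrite inE.
rewrite /D -(card_preimset I (@perm_inj _ sigma)).
exact: sortsum mono _.
Qed.

Lemma I0_sum c : (c <= n)%N -> \sum_(i in sigma @: [set j : 'I_n | (j < c)%N]) dg i = D c /\
   #|sigma @: [set j : 'I_n | (j < c)%N]| = c.
Proof.
move=> hc; split; last by rewrite card_imset ?card_lt //; exact: perm_inj.
rewrite big_imset /=; last by move=> x y _ _; exact: perm_inj.
by apply: eq_bigl => j; rewrite inE.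
Qed.

Lemma spow_neg m : spow (sminus (sone G)) m = Some (nsgn m, 0).
Proof. by elim: m => [//|m IH]; rewrite /spow iterS -/(spow _ m) IH /= addr0. Qed.

Lemma below_le M M' x : below M x -> le M M' -> below M' x.
Proof. by case: x => [[? a]|] //= h1 h2; apply: lt_le_trans h1 h2. Qed.

Lemma mle_sign sg x : mle (smul (Some (sg, 0)) x) x.
Proof. by case: x => [[t b]|] //=; rewrite add0r; apply: leR. Qed.

Lemma main k : charpoly le A k =
    (if (k <= n)%N then
       smul (spow (sminus (sone G)) (n - k))
            (\big[@smul G/sone G]_(i < n | (nat_of_ord i < n - k)%N) d i)
     else szero G).
Proof.
have hsz : size (index_enum 'I_n) = n by rewrite -[RHS]card_ord cardT enumT.
have ur := index_enum_uniq 'I_n.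
have -> : charpoly le A k = \big[sadd/szero G]_(s : 'S_n)
    smul (if odd_perm s then sminus (sone G) else sone G) (Q s (index_enum 'I_n) k).
  by rewrite /charpoly /sdet padd_eval.
case: ifP => hk; last first.
  apply: big1 => s _; rewrite Qbig ?smuls0 // hsz ltnNge hk //.
set c := (n - k)%N.
rewrite spow_neg (bigsmul_pos (g := delta)) => [|i _]; last exact: dpos.
have -> : smul (Some (nsgn c, 0)) (Some (Pos, \sum_(i < n | (i < c)%N) delta i)) = Some (nsgn c, D c) :> S.
  by rewrite /= add0r; case: (nsgn c).
have hc : (c <= n)%N by rewrite leq_subr.
have hcI : forall I : {set 'I_n}, forall s, valid s (index_enum 'I_n) k I -> #|I| = c.
  move=> I s [_ h2 _]; rewrite hsz in h2.
  by apply/eqP; rewrite /c -(eqn_add2r k) subnK // h2.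
have hid : Q 1 (index_enum 'I_n) k = Some (nsgn c, D c).
  case: (lower ur (k := k)) => [|mu [hq hlow]]; first by rewrite hsz.
  rewrite hq hsz -/c; congr (Some (_, _)).
  have [hs0 hcard0] := I0_sum hc.
  have hv0 : valid 1 (index_enum 'I_n) k (sigma @: [set j : 'I_n | (j < c)%N]).
    split => [i _|| i _ _]; [exact: mem_index_enum | by rewrite hcard0 hsz /c subnK | by rewrite perm1].
  have h1 := hlow _ hv0; rewrite w1 hq /= hs0 in h1.
  case: (upper 1 ur k) => [|[I [hv hm]]]; first by rewrite hq.
  rewrite hq w1 /= in hm.
  apply: leA => //; apply: leT hm _; rewrite -(hcI _ _ hv); exact: sumI_le.
rewrite (bigD1 1%g) //= odd_perm1 smul1s hid.
apply: sadd_top; left.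
apply: (big_ind (below (D c))) => //; first by move=> *; apply: below_sadd.
move=> s hs.
apply: (mle_below (y := Q s (index_enum 'I_n) k)).
  by case: (odd_perm s); apply: mle_sign.
case: (upper s ur k) => [->//|[I [hv hm]]].
apply: mle_below hm _.
apply: below_le (nonid_below hs hv) _.
rewrite -(hcI _ _ hv); exact: sumI_le.
Qed.
End Main.
End Aux.

Theorem corollary4p7 (G : zmodType) (le : rel G) (HG : div_tot_ord_group le)
  (n : nat) (A : 'M[Smax G]_n) (HA : TPD le A)
  (d : 'I_n -> Smax G) (sigma : 'S_n)
  (Hd : forall i, d i = A (sigma i) (sigma i))
  (Hsorted : forall i j : 'I_n, nat_of_ord j = (nat_of_ord i).+1 -> sle le (d j) (d i)) :
  forall k : nat, charpoly le A k =
    (if (k <= n)%N then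
       smul (spow (sminus (sone G)) (n - k))
            (\big[@smul G/sone G]_(i < n | (nat_of_ord i < n - k)%N) d i)
     else szero G).
Proof.
move=> k; exact: (Aux.main HG HA Hd Hsorted k).
Qed.
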